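(* For every pair $X,Y$ of nominal sets, the sets $\mathrm{Kl}(\mathcal{P}_{\mathsf{fs}})(X,Y)$ and $\mathrm{Kl}(\mathcal{P}_{\mathsf{ufs}})(X,Y)$ of equivariant maps $X\to\mathcal{P}_{\mathsf{fs}}Y$, respectively $X\to\mathcal{P}_{\mathsf{ufs}}Y$, ordered pointwise by inclusion ($f\le g$ iff $f(x)\subseteq g(x)$ for all $x\in X$), form complete lattices (in particular dcpos with bottom).
   Context: Fix a countably infinite set $\mathbb{A}$ of names and let $\mathrm{Perm}(\mathbb{A})$ be the group of finite permutations of $\mathbb{A}$. A nominal set is a set $X$ with an action of $\mathrm{Perm}(\mathbb{A})$ such that every $x\in X$ has a finite support $S\subseteq\mathbb{A}$ (i.e. $\pi\cdot x=x$ whenever $\pi$ fixes $S$ pointwise); $\mathrm{supp}(x)$ denotes the least support. A map is equivariant if it commutes with the actions. A subset $A\subseteq X$ is finitely supported if it has a finite support for the action $\pi\cdot A=\{\pi\cdot x: x\in A\}$, and uniformly finitely supported if $\bigcup_{x\in A}\mathrm{supp}(x)$ is finite. $\mathcal{P}_{\mathsf{fs}}X$ (resp. $\mathcal{P}_{\mathsf{ufs}}X$) is the nominal set of finitely supported (resp. uniformly finitely supported) subsets of $X$; these are monads on the category $\mathsf{Nom}$ of nominal sets and equivariant maps, with unit $x\mapsto\{x\}$ and multiplication given by union. $\mathrm{Kl}(T)(X,Y)$ denotes the set of morphisms $X\to Y$ of the Kleisli category, i.e. equivariant maps $X\to TY$. *)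

(* Defs.v *)
From Stdlib Require Import List.
Import ListNotations.

Definition name := nat.

Record fperm := FPerm {
  pf : name -> name;
  pinv : name -> name;
  pinvK : forall a, pinv (pf a) = a;
  pfK : forall a, pf (pinv a) = a;
  pfin : exists S : list name, forall a, ~ In a S -> pf a = a
}.

Definition fperm_id : fperm.
Proof.
  refine (FPerm (fun a => a) (fun a => a) (fun _ => eq_refl) (fun _ => eq_refl) _).
  exists nil; auto.
Defined.

Definition fperm_comp (p q : fperm) : fperm.
Proof.
  refine (FPerm (fun a => pf p (pf q a)) (fun a => pinv q (pinv p a)) _ _ _).
  - intro a; rewrite pinvK, pinvK; reflexivity.
  - intro a; rewrite pfK, pfK; reflexivity.
  - destruct (pfin p) as [S HS], (pfin q) as [T HT].
    exists (S ++ T); intros a Ha.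
    rewrite HT, HS; auto; intro H; apply Ha; apply in_or_app; auto.
Defined.

Definition fixes (p : fperm) (S : list name) : Prop :=
  forall a, In a S -> pf p a = a.

Record nominal := Nominal {
  carrier :> Type;
  act : fperm -> carrier -> carrier;
  act_ext : forall p q x, (forall a, pf p a = pf q a) -> act p x = act q x;
  act_id : forall x, act fperm_id x = x;
  act_comp : forall p q x, act (fperm_comp p q) x = act p (act q x);
  act_fin : forall x, exists S : list name,
      forall p, fixes p S -> act p x = x
}.

Definition supports (X : nominal) (S : list name) (x : X) : Prop :=
  forall p, fixes p S -> act X p x = x.

(** Least support: intersection of all finite supports. *)
Definition in_supp (X : nominal) (x : X) (a : name) : Prop :=
  forall S, supports X S x -> In a S.

Definition subset_of (X : nominal) := X -> Prop.

Definition act_set (X : nominal) (p : fperm) (A : subset_of X) : subset_of X :=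
  fun y => exists x, A x /\ y = act X p x.

Definition set_eq (X : nominal) (A B : subset_of X) : Prop :=
  forall y, A y <-> B y.

Definition fs_set (X : nominal) (A : subset_of X) : Prop :=
  exists S : list name, forall p, fixes p S -> set_eq X (act_set X p A) A.

Definition ufs_set (X : nominal) (A : subset_of X) : Prop :=
  exists S : list name, forall x, A x -> forall a, in_supp X x a -> In a S.

Definition equivariant_rel (X Y : nominal) (f : X -> subset_of Y) : Prop :=
  forall p x, set_eq Y (f (act X p x)) (act_set Y p (f x)).

Definition kl_fs (X Y : nominal) (f : X -> subset_of Y) : Prop :=
  equivariant_rel X Y f /\ forall x, fs_set Y (f x).

Definition kl_ufs (X Y : nominal) (f : X -> subset_of Y) : Prop :=
  equivariant_rel X Y f /\ forall x, ufs_set Y (f x).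

Definition kl_le (X Y : nominal) (f g : X -> subset_of Y) : Prop :=
  forall x y, f x y -> g x y.

Definition complete_lattice_on (X Y : nominal) (K : (X -> subset_of Y) -> Prop) : Prop :=
  forall F : (X -> subset_of Y) -> Prop, (forall f, F f -> K f) ->
    (exists s, K s /\ (forall f, F f -> kl_le X Y f s) /\
       (forall u, K u -> (forall f, F f -> kl_le X Y f u) -> kl_le X Y s u)) /\
    (exists m, K m /\ (forall f, F f -> kl_le X Y m f) /\
       (forall l, K l -> (forall f, F f -> kl_le X Y l f) -> kl_le X Y l m)).

(* Main.v *)
Require Import Defs.
From Stdlib Require Import List Arith Lia.
Import ListNotations.

Definition inv (p : fperm) : fperm.
Proof.
  refine (FPerm (pinv p) (pf p) (pfK p) (pinvK p) _).
  destruct (pfin p) as [S HS]; exists S; intros a Ha.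
  pose proof (pinvK p a) as E; rewrite (HS a Ha) in E; exact E.
Defined.

Lemma act_inv_l (X : nominal) p x : act X (inv p) (act X p x) = x.
Proof.
  rewrite <- act_comp. rewrite (act_ext X _ fperm_id). apply act_id.
  intro a; simpl; apply pinvK.
Qed.

Lemma act_inv_r (X : nominal) p x : act X p (act X (inv p) x) = x.
Proof.
  rewrite <- act_comp. rewrite (act_ext X _ fperm_id). apply act_id.
  intro a; simpl; apply pfK.
Qed.

Definition swapf (a b c : nat) := if Nat.eqb c a then b else if Nat.eqb c b then a else c.

Lemma swapf_inv a b c : swapf a b (swapf a b c) = c.
Proof.
  unfold swapf.
  destruct (Nat.eqb_spec c a) as [->|Ha].
  - destruct (Nat.eqb_spec b a) as [->|]; [reflexivity|].
    rewrite Nat.eqb_refl. reflexivity.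
  - destruct (Nat.eqb_spec c b) as [->|Hb].
    + destruct (Nat.eqb_spec a b) as [->|]; [congruence|]. rewrite Nat.eqb_refl. reflexivity.
    + destruct (Nat.eqb_spec c a); [congruence|]. destruct (Nat.eqb_spec c b); [congruence|].
      reflexivity.
Qed.

Definition swap (a b : nat) : fperm.
Proof.
  refine (FPerm (swapf a b) (swapf a b) (swapf_inv a b) (swapf_inv a b) _).
  exists [a; b]. intros c Hc. unfold swapf.
  destruct (Nat.eqb_spec c a). subst; simpl in Hc; tauto.
  destruct (Nat.eqb_spec c b). subst; simpl in Hc; tauto. reflexivity.
Defined.

Fixpoint maxl (l : list nat) : nat := match l with nil => 0 | x :: l => Nat.max x (maxl l) end.

Lemma maxl_ge l x : In x l -> x <= maxl l.
Proof. induction l; simpl; [tauto|]. intros [->|H]; [lia|]. specialize (IHl H); lia. Qed.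

Lemma in_supp_act (X : nominal) x a p : in_supp X x a -> in_supp X (act X p x) (pf p a).
Proof.
  intros H S HS.
  assert (Hx : supports X (map (pinv p) S) x).
  { intros q Hq. set (r := fperm_comp p (fperm_comp q (inv p))).
    assert (E : act X q x = act X (inv p) (act X r (act X p x))).
    { unfold r. rewrite <- !act_comp. apply act_ext. intro c; simpl. rewrite !pinvK. reflexivity. }
    rewrite E. rewrite (HS r). apply act_inv_l.
    intros s Hs. unfold r; simpl. rewrite Hq. apply pfK. apply in_map; auto. }
  specialize (H _ Hx). apply in_map_iff in H. destruct H as [s [Es Hs]]. subst a.
  rewrite pfK. exact Hs.
Qed.

Lemma equiv_supp X Y f x S p : equivariant_rel X Y f -> supports X S x -> fixes p S ->
  set_eq Y (act_set Y p (f x)) (f x).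
Proof. intros Hf HS Hp y. rewrite <- (Hf p x y). rewrite (HS p Hp). tauto. Qed.

Lemma key Y (A : subset_of Y) L T y a :
  (forall p, fixes p L -> set_eq Y (act_set Y p A) A) ->
  (forall z, A z -> forall c, in_supp Y z c -> In c T) -> A y -> in_supp Y y a -> In a L.
Proof.
  intros HS HT Hy Ha. destruct (in_dec Nat.eq_dec a L) as [|Hn]; auto. exfalso.
  set (b := 1 + maxl (a :: L ++ T)).
  assert (Hb : forall c, In c (a :: L ++ T) -> c < b)
    by (intros c Hc; unfold b; pose proof (maxl_ge _ _ Hc); lia).
  set (sw := swap a b).
  assert (Hfix : fixes sw L).
  { intros c Hc; unfold sw, swap; simpl; unfold swapf.
    destruct (Nat.eqb_spec c a). subst; contradiction.
    destruct (Nat.eqb_spec c b). assert (c < b) by (apply Hb; right; apply in_or_app; auto). lia.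
    reflexivity. }
  assert (H : A (act Y sw y)). { apply (HS sw Hfix). exists y; auto. }
  pose proof (in_supp_act Y y a sw Ha) as H0.
  assert (H1 : pf sw a = b) by (simpl; unfold swapf; rewrite Nat.eqb_refl; auto).
  rewrite H1 in H0. specialize (HT _ H b H0).
  assert (b < b) by (apply Hb; right; apply in_or_app; auto). lia.
Qed.

Lemma Lsupp X Y f x y a : kl_ufs X Y f -> f x y -> in_supp Y y a -> in_supp X x a.
Proof.
  intros [Hf Hu] Hy Ha S HS. destruct (Hu x) as [T HT].
  eapply key; eauto. intros p Hp; eapply equiv_supp; eauto.
Qed.

Theorem proposition3p7 (X Y : nominal) :
  complete_lattice_on X Y (kl_fs X Y) /\ complete_lattice_on X Y (kl_ufs X Y).
Proof.
  split; intros F HF; split.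
  - exists (fun x y => exists f, F f /\ f x y). split; [split|split].
    + intros p x y; split.
      * intros [f [Ff Hy]]. apply (proj1 (HF f Ff) p x y) in Hy.
        destruct Hy as [z [Hz ->]]. exists z; split; [first [apply Hz; exact Ff | eauto | exists f; auto] | reflexivity].
      * intros [z [[f [Ff Hz]] ->]]. exists f; split; auto.
        apply (proj1 (HF f Ff) p x). exists z; split; [first [apply Hz; exact Ff | eauto | exists f; auto] | reflexivity].
    + intros x. destruct (act_fin X x) as [S HS]. exists S. intros p Hp y. split.
      * intros [z [[f [Ff Hz]] ->]]. exists f; split; auto.
        apply (equiv_supp X Y f x S p (proj1 (HF f Ff)) HS Hp). exists z; split; [first [apply Hz; exact Ff | eauto | exists f; auto] | reflexivity].
      * intros [f [Ff Hy]]. apply (equiv_supp X Y f x S p (proj1 (HF f Ff)) HS Hp) in Hy.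
        destruct Hy as [z [Hz ->]]. exists z; split; [first [apply Hz; exact Ff | eauto | exists f; auto] | reflexivity].
    + intros f Ff x y Hy; eauto.
    + intros u Ku Hu x y [f [Ff Hy]]; eapply Hu; eauto.
  - exists (fun x y => forall f, F f -> f x y). split; [split|split].
    + intros p x y; split.
      * intros H. exists (act Y (inv p) y). split; [|symmetry; apply act_inv_r].
        intros f Ff. specialize (H f Ff). apply (proj1 (HF f Ff) p x y) in H.
        destruct H as [z [Hz ->]]. rewrite act_inv_l. auto.
      * intros [z [Hz ->]] f Ff. apply (proj1 (HF f Ff) p x). exists z; split; [first [apply Hz; exact Ff | eauto | exists f; auto] | reflexivity].
    + intros x. destruct (act_fin X x) as [S HS]. exists S. intros p Hp y. split.
      * intros [z [Hz ->]] f Ff. apply (equiv_supp X Y f x S p (proj1 (HF f Ff)) HS Hp).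
        exists z; split; [first [apply Hz; exact Ff | eauto | exists f; auto] | reflexivity].
      * intros H. exists (act Y (inv p) y). split; [|symmetry; apply act_inv_r].
        intros f Ff. specialize (H f Ff).
        apply (equiv_supp X Y f x S p (proj1 (HF f Ff)) HS Hp) in H.
        destruct H as [z [Hz ->]]. rewrite act_inv_l. auto.
    + intros f Ff x y H; apply H; auto.
    + intros l Kl Hl x y Hy f Ff; eapply Hl; eauto.
  - exists (fun x y => exists f, F f /\ f x y). split; [split|split].
    + intros p x y; split.
      * intros [f [Ff Hy]]. apply (proj1 (HF f Ff) p x y) in Hy.
        destruct Hy as [z [Hz ->]]. exists z; split; [first [apply Hz; exact Ff | eauto | exists f; auto] | reflexivity].
      * intros [z [[f [Ff Hz]] ->]]. exists f; split; auto.
        apply (proj1 (HF f Ff) p x). exists z; split; [first [apply Hz; exact Ff | eauto | exists f; auto] | reflexivity].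
    + intros x. destruct (act_fin X x) as [S HS]. exists S.
      intros y [f [Ff Hy]] a Ha. apply (Lsupp X Y f x y a (HF f Ff) Hy Ha). exact HS.
    + intros f Ff x y Hy; eauto.
    + intros u Ku Hu x y [f [Ff Hy]]; eapply Hu; eauto.
  - exists (fun x y => (forall f, F f -> f x y) /\ (forall a, in_supp Y y a -> in_supp X x a)).
    split; [split|split].
    + intros p x y; split.
      * intros [H H2]. exists (act Y (inv p) y). split; [split|symmetry; apply act_inv_r].
        -- intros f Ff. specialize (H f Ff). apply (proj1 (HF f Ff) p x y) in H.
           destruct H as [z [Hz ->]]. rewrite act_inv_l. auto.
        -- intros a Ha. apply (in_supp_act _ _ _ p) in Ha. rewrite act_inv_r in Ha.
           apply H2 in Ha. apply (in_supp_act _ _ _ (inv p)) in Ha.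
           rewrite act_inv_l in Ha. simpl in Ha; rewrite pinvK in Ha. exact Ha.
      * intros [z [[H1 H2] ->]]. split.
        -- intros f Ff. apply (proj1 (HF f Ff) p x). exists z; split; [first [apply H1; exact Ff | eauto | exists f; auto] | reflexivity].
        -- intros a Ha. apply (in_supp_act _ _ _ (inv p)) in Ha. rewrite act_inv_l in Ha.
           apply H2 in Ha. apply (in_supp_act _ _ _ p) in Ha. simpl in Ha.
           rewrite pfK in Ha. exact Ha.
    + intros x. destruct (act_fin X x) as [S HS]. exists S.
      intros y [_ H2] a Ha. apply (H2 a Ha S HS).
    + intros f Ff x y [H _]; apply H; exact Ff.
    + intros l Kl Hl x y Hy. split.
      * intros f Ff; eapply Hl; eauto.
      * intros a Ha; eapply Lsupp; eauto.
Qed.
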